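(* Let $(G,C,s,t)$ be an input to $\mathrm{DACC}$ with $n=|V(G)|$ and $m=|E(G)|$, and let $\mu(C)$ denote the number of maximal independent sets of $C$. The algorithm that enumerates the maximal independent sets $I$ of $C$ using an output-sensitive enumeration procedure with delay $M(m)$ (where $M(k)=\mathcal{O}(k^{2.372})$ is the time to multiply two $k\times k$ matrices), and for each $I$ runs breadth-first search to test whether the digraph $(V(G),I)$ contains a directed $s$–$t$ path (returning True as soon as one is found, and False otherwise), runs in time \[\mathcal{O}(n+m)\cdot M(m)\cdot \mu(C)\;\le\;\mathcal{O}(n^{6.75})\cdot\mu(C)\;\le\;\mathcal{O}(1.45^{n^2}).\]
   Context: Let $\Gamma=(V,E)$ be a directed acyclic graph. A constraint graph for $\Gamma$ is a simple undirected graph $C=(E,E')$ whose vertex set is the edge set of $\Gamma$; an edge $e_1e_2\in E'$ represents the constraint that the edges $e_1$ and $e_2$ cannot both be present. A subgraph $\Gamma'\subseteq\Gamma$ is valid if its edge set is an independent set in $C$. The problem $\mathrm{DACC}$ takes as input a directed acyclic graph $\Gamma$, a constraint graph $C$ for $\Gamma$, and vertices $s,t$, and asks whether some valid subgraph of $\Gamma$ contains a directed path from $s$ to $t$. An output-sensitive enumeration algorithm with delay $d$ for a set $S$ lists all elements of $S$ in total time at most $d|S|$. *)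

(* Defs.v *)
From Stdlib Require Import Reals.
From mathcomp Require Import all_boot.
Set Implicit Arguments. Unset Strict Implicit. Unset Printing Implicit Defensive.

Section DACC.
Variable V : finType.

Definition edges (A : rel V) : {set V * V} := [set p | A p.1 p.2].

Definition acyclic (A : rel V) : Prop := forall x y, A x y -> ~~ connect A y x.

(* C : rel (V*V) is a constraint graph for Gamma: a simple undirected graph
   (symmetric, irreflexive) whose vertex set is E (only edges of Gamma are related). *)
Definition constraint_graph (A : rel V) (C : rel (V * V)) : Prop :=
  [/\ forall e f, C e f = C f e,
      forall e, ~~ C e e &
      forall e f, C e f -> (e \in edges A) && (f \in edges A)].

Definition independent (A : rel V) (C : rel (V * V)) (I : {set V * V}) : bool :=
  (I \subset edges A) && [forall e in I, forall f in I, ~~ C e f].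

Definition maximal_independent (A : rel V) (C : rel (V * V)) (I : {set V * V}) : bool :=
  independent A C I &&
  [forall e in edges A :\: I, ~~ independent A C (e |: I)].

Definition mu (A : rel V) (C : rel (V * V)) : nat :=
  #|[set I : {set V * V} | maximal_independent A C I]|.

Definition reach (F : {set V * V}) (s t : V) : bool :=
  connect (fun x y => (x, y) \in F) s t.

Definition DACC (A : rel V) (C : rel (V * V)) (s t : V) : Prop :=
  exists F : {set V * V}, independent A C F /\ reach F s t.

(* Cost model of one run of an output-sensitive enumerator of the maximal
   independent sets of C with delay d: L lists each maximal independent set exactly
   once, the i-th output is produced at time ts_i, all outputs are produced by
   time Tenum, and the total time Tenum is at most d * |S|. *)
Definition enum_run (A : rel V) (C : rel (V * V)) (d : nat)
  (L : seq {set V * V}) (ts : seq nat) (Tenum : nat) : Prop :=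
  [/\ uniq L, forall I, (I \in L) = maximal_independent A C I,
      size ts = size L & sorted leq ts] /\
  (forall i, (i < size ts)%N -> (nth 0 ts i <= Tenum)%N) /\
  (Tenum <= d * size L)%N.

(* The algorithm: for each output I (in order) run BFS on (V, I), costing bfs_j time
   for the j-th output; return true as soon as an s-t path is found, false otherwise. *)
Definition alg_output (L : seq {set V * V}) (s t : V) : bool :=
  has (fun I => reach I s t) L.

Definition alg_time (L : seq {set V * V}) (ts bfs : seq nat) (Tenum : nat)
  (s t : V) : nat :=
  let k := find (fun I => reach I s t) L in
  if alg_output L s t then (nth 0 ts k + \sum_(j < k.+1) nth 0 bfs j)%N
  else (Tenum + \sum_(j < size L) nth 0 bfs j)%N.

End DACC.

(* Main.v *)
Require Import Defs.
From Stdlib Require Import Reals Lra Lia.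
From mathcomp Require Import all_boot zify.
Set Implicit Arguments. Unset Strict Implicit. Unset Printing Implicit Defensive.
Lemma poly_exp k n : 0 < k -> n ^ k <= k ^ k * 2 ^ n.
Proof.
move=> k0; set a := n %/ k.
have h1 : n <= k * a.+1.
  rewrite {1}(divn_eq n k) -/a. have := ltn_pmod n k0. lia.
have h2 : a.+1 <= 2 ^ a by apply: ltn_expl.
have h3 : a * k <= n by apply: leq_divM.
have e1 : n ^ k <= (k * a.+1) ^ k by rewrite leq_exp2r.
rewrite expnMn in e1.
have e2 : a.+1 ^ k <= (2 ^ a) ^ k by rewrite leq_exp2r.
rewrite -expnM in e2.
have e3 : 2 ^ (a * k) <= 2 ^ n by apply: leq_pexp2l.
apply: (leq_trans e1); rewrite leq_mul2l; apply/orP; right.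
exact: leq_trans e2 e3.
Qed.

Section G.
Variable V : finType.

Lemma edge_count (A : rel V) : acyclic A -> #|edges A|.*2 + #|V| <= #|V| * #|V|.
Proof.
move=> ac.
have noloop : forall x, ~~ A x x.
  by move=> x; apply/negP => h; have := ac _ _ h; rewrite connect0.
have noback : forall x y, A x y -> ~~ A y x.
  by move=> x y h; apply/negP => h'; have := ac _ _ h; rewrite connect1.
set E := edges A.
set sw := fun p : V * V => (p.2, p.1).
have swi : injective sw by case=> [x y] [x' y'] [-> ->].
set R := sw @: E.
set D := [set (x, x) | x : V].
have cR : #|R| = #|E| by rewrite card_imset.
have cD : #|D| = #|V| by rewrite card_imset //; move=> x y [].
have dER : E :&: R = set0.
  apply/setP => [[x y]]; rewrite !inE; apply/negP => /andP[h /imsetP[[u v] hu]]; rewrite /sw /= => -[ex ey]; subst x y.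
  by move: hu; rewrite inE /= => huv; move: h; rewrite /= (negbTE (noback _ _ huv)).
have dED : (E :|: R) :&: D = set0.
  apply/setP => [[x y]]; rewrite !inE; apply/negP => /andP[hER hD].
  case/imsetP: hD => z _ [ex ey]; subst x y.
  case/orP: hER => [h|].
    by move: h; rewrite /= (negbTE (noloop z)).
  case/imsetP => [[u v] hu]; rewrite /sw /= => -[e1 e2]; subst u v.
  by move: hu; rewrite inE /= (negbTE (noloop z)).
have := cardsUI (E :|: R) D; rewrite dED cards0 addn0 => h1.
have := cardsUI E R; rewrite dER cards0 addn0 => h2.
have h3 : #|(E :|: R) :|: D| <= #|V| * #|V| by rewrite -card_prod max_card.
move: h3; rewrite h1 h2 cR cD -addnn. done.
Qed.
End G.

Section G2.
Variable V : finType.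
Implicit Types (A : rel V) (C : rel (V * V)).

Lemma max_ext A C F : independent A C F ->
  exists I, maximal_independent A C I && (F \subset I).
Proof.
move=> hF.
have P0 : independent A C F && (F \subset F) by rewrite hF subxx.
case: (@arg_maxnP _ F (fun I => independent A C I && (F \subset I)) (fun I : {set V * V} => #|I|) P0) => I /andP[hI hFI] maxI.
exists I; rewrite hFI andbT /maximal_independent hI /=.
apply/forallP => e; apply/implyP => he; apply/negP => hind.
have hP : independent A C (e |: I) && (F \subset e |: I).
  by rewrite hind /= (subset_trans hFI) // subsetUr.
have hne : e \notin I by move: he; rewrite in_setD => /andP[].
have := maxI _ hP; rewrite cardsU1 hne add1n. by rewrite /geq /= ltnn.
Qed.

Lemma reach_mono (F I : {set V * V}) s t : F \subset I -> reach F s t -> reach I s t.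
Proof.
move=> sub; apply: connect_sub => x y h; apply: connect1; exact: (subsetP sub _ h).
Qed.

Lemma indep_sub A C I : independent A C I -> I \subset edges A.
Proof. by case/andP. Qed.

Lemma alg_correct A C d L ts Tenum s t : enum_run A C d L ts Tenum ->
  (alg_output L s t <-> DACC A C s t).
Proof.
case=> [[uL memL _ _] _].
split.
  case/hasP => I hI hr; exists I; split => //.
  by move: hI; rewrite memL => /andP[].
case=> F [hF hr]; case: (max_ext hF) => I /andP[hI sub].
apply/hasP; exists I; first by rewrite memL.
exact: reach_mono sub hr.
Qed.

Lemma size_mu A C d L ts Tenum : enum_run A C d L ts Tenum -> size L = mu A C.
Proof.
case=> [[uL memL _ _] _].
rewrite /mu -(card_uniqP uL); apply: eq_card => I; by rewrite inE memL.
Qed.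

Lemma mu_le A C : mu A C <= 2 ^ #|edges A|.
Proof.
rewrite -card_powerset /mu; apply: subset_leq_card; apply/subsetP => I.
by rewrite !inE => /andP[/indep_sub].
Qed.

Lemma T_bound A C s t L ts bfs Tenum d cB :
  enum_run A C d L ts Tenum -> size bfs = size L ->
  (forall j, j < size L -> nth 0 bfs j <= cB * (#|V| + #|nth set0 L j|)) ->
  alg_time L ts bfs Tenum s t <= d * size L + size L * (cB * (#|V| + #|edges A|)).
Proof.
move=> er hsz hb; have [[uL memL hts _] [hTe hTd]] := er.
have hb' : forall j, j < size L -> nth 0 bfs j <= cB * (#|V| + #|edges A|).
  move=> j hj; apply: (leq_trans (hb j hj)); rewrite leq_mul2l leq_add2l; apply/orP; right.
  apply: subset_leq_card; apply: (@indep_sub A C).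
  by have := mem_nth set0 hj; rewrite memL => /andP[].
have hs : forall p, p <= size L -> \sum_(j < p) nth 0 bfs j <= p * (cB * (#|V| + #|edges A|)).
  move=> p hp.
  have : \sum_(j < p) nth 0 bfs j <= \sum_(j < p) (cB * (#|V| + #|edges A|)).
    by apply: leq_sum => j _; apply: hb'; exact: leq_trans (ltn_ord j) hp.
  by rewrite sum_nat_const card_ord.
rewrite /alg_time; case: ifP => hout.
  set k := find _ L.
  have hk : k < size L by rewrite /k -has_find.
  have h1 : nth 0 ts k <= Tenum by apply: hTe; rewrite hts.
  have h2 := hs _ hk.
  have h3 : size L * (cB * (#|V| + #|edges A|)) >= k.+1 * (cB * (#|V| + #|edges A|)).
    by rewrite leq_mul2r hk orbT.
  lia.
have := hs _ (leqnn (size L)); lia.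
Qed.
End G2.

Section R2.
Local Open Scope R_scope.


Lemma Rpow_nonneg (x y : R) : (0 <= Rpower x y).
Proof. unfold Rpower; left; apply exp_pos. Qed.

Lemma e_facts : (2 + INR 2372 / INR 1000 + INR 2372 / INR 1000 <= INR 675 / INR 100) /\
  (2 <= INR 675 / INR 100) /\ (INR 675 / INR 100 <= 7) /\ (0 <= INR 2372 / INR 1000).
Proof. rewrite !INR_IZR_INZ /=; lra. Qed.

Lemma RpowN (x : R) k : (0 < x) -> Rpower x (INR k) = (x ^ k).
Proof. by move=> hx; rewrite Rpower_pow. Qed.

Lemma R3 (M : nat -> nat) cM N0 K n m :
 (forall k, (N0 <= k)%N -> (INR (M k) <= cM * Rpower (INR k) (INR 2372 / INR 1000))) ->
 (forall k, (k <= N0)%N -> (M k <= K)%N) -> (0 < n)%N -> (m <= n * n)%N ->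
 (INR ((n + m) * M m)%N <= 2 * (INR K + Rabs cM) * Rpower (INR n) (INR 675 / INR 100)).
Proof.
move=> HM HK hn hm.
have [f1 [f2 [f3 f4]]] := e_facts.
set e1 := (INR 2372 / INR 1000) in HM f1 f4 *; set e := (INR 675 / INR 100) in f1 f2 f3 *.
have n1 : (1 <= INR n) by apply: (le_INR 1); apply/leP.
have n0 : (0 < INR n) by lra.
have hnm : (INR (n + m)%N <= 2 * Rpower (INR n) 2).
  have -> : Rpower (INR n) 2 = INR (n * n)%N.
    have -> : 2 = INR 2 by rewrite /=; lra.
    rewrite RpowN // mult_INR /=; lra.
  have -> : 2 = INR 2 by rewrite /=; lra.
  rewrite -mult_INR; apply: le_INR; apply/leP; nia.
have P2e : (Rpower (INR n) 2 <= Rpower (INR n) e) by apply: Rle_Rpower.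
have Pe0 := Rpow_nonneg (INR n) e.
have P20 := Rpow_nonneg (INR n) 2.
have a0 := Rabs_pos cM.
have K0 := pos_INR K.
rewrite mult_INR.
have INM0 := pos_INR (M m).
have INnm0 := pos_INR (n + m)%N.
case: (leqP m N0) => hmN.
  have hK : (INR (M m) <= INR K) by apply: le_INR; apply/leP; exact: HK.
  apply: Rle_trans (Rmult_le_compat _ _ _ _ INnm0 INM0 hnm hK) _.
  nra.
have m1 : (1 <= INR m) by apply: (le_INR 1); apply/leP; lia.
have hMm : (INR (M m) <= Rabs cM * Rpower (INR n) (e1 + e1)).
  apply: Rle_trans (HM m (ltnW hmN)) _.
  have hp := Rpow_nonneg (INR m) e1.
  apply: (@Rle_trans _ (Rabs cM * Rpower (INR m) e1)).
    apply: Rmult_le_compat_r => //; exact: Rle_abs.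
  apply: Rmult_le_compat_l => //.
  rewrite Rpower_plus Rpower_mult_distr //.
  apply: Rle_Rpower_l; first lra.
  split; first lra.
  rewrite -mult_INR; apply: le_INR; apply/leP; exact: hm.
apply: Rle_trans (Rmult_le_compat _ _ _ _ INnm0 INM0 hnm hMm) _.
have : (Rpower (INR n) 2 * Rpower (INR n) (e1 + e1) <= Rpower (INR n) e).
  rewrite -Rpower_plus; apply: Rle_Rpower => //; lra.
have := Rpow_nonneg (INR n) (e1 + e1).
nra.
Qed.

Lemma INR_expn x k : INR (x ^ k)%N = INR x ^ k.
Proof. elim: k => [|k IH]; first by rewrite expn0. by rewrite expnS mult_INR IH. Qed.

Lemma Q n m : (0 < n)%N -> (m.*2 + n <= n * n)%N ->
  (INR (n ^ 7 * 2 ^ m)%N <= INR (14 ^ 7)%N * Rpower (INR 145 / INR 100) (INR (n * n)%N)).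
Proof.
move=> hn hm.
have hnat : ((n ^ 7 * 2 ^ m) ^ 2 <= (14 ^ 7) ^ 2 * 2 ^ (n * n))%N.
  rewrite expnMn -!expnM.
  have h1 : (n ^ (7 * 2) <= 14 ^ 14 * 2 ^ n)%N by apply: poly_exp.
  have h2 : (2 ^ n * 2 ^ (m * 2) <= 2 ^ (n * n))%N.
    by rewrite -expnD; apply: leq_pexp2l => //; rewrite -muln2 in hm; lia.
  rewrite (_ : 7 * 2 = 14)%N //.
  have h3 := leq_mul h1 (leqnn (2 ^ (m * 2))).
  apply: (leq_trans h3).
  by rewrite -mulnA leq_mul2l h2 orbT.
have hR := le_INR _ _ (elimT leP hnat).
rewrite INR_expn in hR.
have -> : INR 145 / INR 100 = 145 / 100 by rewrite !INR_IZR_INZ.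
rewrite RpowN; last lra.
set x := INR (n ^ 7 * 2 ^ m)%N in hR *.
rewrite mult_INR !INR_expn in hR.
set q := (n * n)%N in hR *.
have h2 : (INR 2 ^ q <= ((145/100) ^ q) ^ 2).
  rewrite -pow_mult Nat.mul_comm pow_mult; apply: pow_incr.
  rewrite /=; lra.
have x0 : (0 <= x) by apply: pos_INR.
have c0 := pos_INR (14 ^ 7)%N.
have p0 : (0 <= (145/100) ^ q) by apply: pow_le; lra.
have hx2 : (x ^ 2 <= (INR (14 ^ 7)%N * (145/100) ^ q) ^ 2).
  rewrite Rpow_mult_distr.
  rewrite INR_expn; apply: (Rle_trans _ _ _ hR); apply: Rmult_le_compat_l => //; apply: pow_le; apply: pow_le; exact: pos_INR.
apply: Rnot_lt_le => hlt.
move: hx2 hlt; set y := INR (14 ^ 7)%N * (145 / 100) ^ q => hx2 hlt.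
have y0 : 0 <= y by apply: Rmult_le_pos.
rewrite /= !Rmult_1_r in hx2.
nra.
Qed.

Lemma Qex : exists Z : R, 1 <= Z /\ forall n m, (0 < n)%N -> (m.*2 + n <= n * n)%N ->
  INR (n ^ 7)%N * INR (2 ^ m)%N <= Z * Rpower (INR 145 / INR 100) (INR (n * n)%N).
Proof.
exists (INR (14 ^ 7)%N); split.
  apply: (le_INR 1); apply/leP; by rewrite expn_gt0.
move=> n m hn hm; rewrite -mult_INR; exact: Q.
Qed.

End R2.

Unset Implicit Arguments.

Theorem lemma4p1
  (M : nat -> nat)
  (HMpos : forall k, (0 < M k)%N)
  (HMO : exists (cM : R) (N0 : nat), forall k, (N0 <= k)%N ->
           Rle (INR (M k)) (Rmult cM (Rpower (INR k) (Rdiv (INR 2372) (INR 1000)))))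
  (cB : nat) :
  exists c : R, Rlt 0 c /\
  forall (V : finType) (A : rel V) (C : rel (V * V)) (s t : V)
         (L : seq {set V * V}) (ts bfs : seq nat) (Tenum : nat),
    acyclic A ->
    constraint_graph A C ->
    enum_run A C (M #|edges A|) L ts Tenum ->
    size bfs = size L ->
    (forall j, (j < size L)%N -> (nth 0 bfs j <= cB * (#|V| + #|nth set0 L j|))%N) ->
    let n := #|V| in
    let m := #|edges A| in
    let T := alg_time L ts bfs Tenum s t in
    (alg_output L s t <-> DACC A C s t) /\
    Rle (INR T) (Rmult c (INR ((n + m) * M m * mu A C))) /\
    Rle (INR T) (Rmult c (Rmult (Rpower (INR n) (Rdiv (INR 675) (INR 100))) (INR (mu A C)))) /\
    Rle (INR T) (Rmult c (Rpower (Rdiv (INR 145) (INR 100)) (INR (n * n)))).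
Proof.
case: HMO => cM [N0 HM].
set K := (\sum_(k < N0.+1) M k)%N.
have HK : forall k, (k <= N0)%N -> (M k <= K)%N.
  move=> k hk; rewrite /K (bigD1 (Ordinal (hk : (k < N0.+1)%N))) //=; exact: leq_addr.
set a := Rabs cM.
set B := (1 + cB)%N.
have a0 : Rle 0 a by apply: Rabs_pos.
have K0 := pos_INR K.
have B1 : Rle 1 (INR B) by apply: (le_INR 1); apply/leP; rewrite /B; lia.
have [Z [c7 HQ]] := Qex.
set c0 := Rmult 2 (Rplus (Rplus (INR K) a) 1).
have c01 : Rle 1 c0 by rewrite /c0; lra.
exists (Rmult (Rmult (INR B) c0) (Z)).
split; first by apply: Rmult_lt_0_compat; apply: Rmult_lt_0_compat || lra; lra.
move=> V A C s t L ts bfs Tenum ac cg er hsz hb n m T.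
have hn : (0 < n)%N by apply/card_gt0P; exists s.
have hm := edge_count ac.
have hL := size_mu er.
have hmu := mu_le A C.
have hT := T_bound s t er hsz hb.
rewrite -/T -/n -/m hL in hT.
have hMm := HMpos m.
have hT' : (T <= B * ((n + m) * M m * mu A C))%N.
  apply: (leq_trans hT); rewrite /B; nia.
have hTR : Rle (INR T) (Rmult (INR B) (Rmult (INR ((n + m) * M m)) (INR (mu A C)))).
  rewrite -!mult_INR; apply: le_INR; apply/leP; move: hT'; rewrite !mulnA; lia.
have hmn : (m <= n * n)%N by rewrite -/m -/n in hm; lia.
have hR3 := R3 HM HK hn hmn.
fold a in hR3.
split; first exact: alg_correct er.
have mu0 := pos_INR (mu A C).
have nm0 := pos_INR ((n + m) * M m).
have Pe0 := Rpow_nonneg (INR n) (INR 675 / INR 100).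
split.
  apply: (Rle_trans _ _ _ hTR).
  have -> : INR ((n + m) * M m * mu A C) = Rmult (INR ((n + m) * M m)) (INR (mu A C)) by apply: mult_INR.
  have hc : Rle (INR B) (Rmult (Rmult (INR B) c0) (Z)).
    have : Rle 1 (Rmult c0 (Z)) by nra.
    nra.
  apply: Rmult_le_compat_r => //; exact: Rmult_le_pos.
split.
  apply: (Rle_trans _ _ _ hTR).
  have hk : Rle (Rmult 2 (INR K + a)) c0 by rewrite /c0; lra.
  have h1 : Rle (INR ((n + m) * M m)) (Rmult c0 (Rpower (INR n) (INR 675 / INR 100))).
    apply: (Rle_trans _ _ _ hR3); apply: Rmult_le_compat_r => //.
  set P := Rpower (INR n) (INR 675 / INR 100) in h1 *.
  set X := INR ((n + m) * M m) in h1 nm0 *.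
  set Y := INR (mu A C) in mu0 *.
  have hB0 : Rle 0 (INR B) by lra.
  have e1 : Rle (Rmult (INR B) (Rmult X Y)) (Rmult (INR B) (Rmult (Rmult c0 P) Y)).
    apply: Rmult_le_compat_l => //; apply: Rmult_le_compat_r => //.
  apply: (Rle_trans _ _ _ e1).
  have hPY : Rle 0 (Rmult P Y) by apply: Rmult_le_pos.
  have hcz : Rle (Rmult (INR B) c0) (Rmult (Rmult (INR B) c0) Z).
    have : Rle 0 (Rmult (INR B) c0) by apply: Rmult_le_pos; lra.
    nra.
  have -> : Rmult (INR B) (Rmult (Rmult c0 P) Y) = Rmult (Rmult (INR B) c0) (Rmult P Y) by ring.
  by apply: Rmult_le_compat_r.
have [_ [_ [f3 _]]] := e_facts.
have n1 : Rle 1 (INR n) by apply: (le_INR 1); apply/leP.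
have P7 : Rle (Rpower (INR n) (INR 675 / INR 100)) (INR (n ^ 7)).
  rewrite INR_expn -RpowN; last lra.
  apply: Rle_Rpower => //; rewrite /=; lra.
have hQ := HQ _ _ hn hm.
have hmu' : Rle (INR (mu A C)) (INR (2 ^ m)) by apply: le_INR; apply/leP.
have n70 := pos_INR (n ^ 7).
have m20 := pos_INR (2 ^ m).
apply: (Rle_trans _ _ _ hTR).
have h1 : Rle (Rmult (INR ((n + m) * M m)) (INR (mu A C)))
            (Rmult (Rmult c0 (INR (n ^ 7))) (INR (2 ^ m))).
  apply: Rmult_le_compat => //.
  apply: (Rle_trans _ _ _ hR3); apply: Rmult_le_compat => //; rewrite /c0; lra.
have c00 : Rle 0 c0 by lra.
have h2 := Rmult_le_compat_l _ _ _ c00 hQ.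
have h3 : Rle (Rmult (INR ((n + m) * M m)) (INR (mu A C))) (Rmult c0 (Rmult (Z) (Rpower (INR 145 / INR 100) (INR (n * n))))).
  apply: (Rle_trans _ _ _ h1); rewrite Rmult_assoc; exact: h2.
have hB0 : Rle 0 (INR B) by lra.
have := Rmult_le_compat_l _ _ _ hB0 h3.
move=> h4; apply: (Rle_trans _ _ _ h4); right; ring.
Qed.
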